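(* There is an absolute constant $C>0$ such that the following holds. Let $\varepsilon=\varepsilon(n)$ satisfy $\varepsilon\le 1$ and $n\varepsilon(n)\to\infty$ (i.e. $\varepsilon\in[\omega(1/n),1]$). Then for all sufficiently large $n$, in the variable-processor cup game on $n$ cups with $\varepsilon$ resource augmentation, the greedy emptying algorithm guarantees, against every filler and at every time, backlog at most $C\varepsilon^{-1}\log n$.
   Context: The variable-processor cup game with $\varepsilon$ resource augmentation on $n$ cups: there are $n$ cups with real fills $x_1,\dots,x_n$, all initially $0$, and two adaptive players, a filler and an emptier. In each round the filler chooses an integer $1\le p\le n$ and reals $a_1,\dots,a_n\in[0,1]$ with $\sum_i a_i=p$ and replaces each $x_i$ by $x_i+a_i$; then the emptier chooses a set $S$ of exactly $p$ cups and replaces $x_i$ by $\max(0,x_i-(1+\varepsilon))$ for each $i\in S$ (fills never go below $0$). The backlog is $\max_i x_i$. The greedy emptier chooses $S$ to be $p$ cups of largest fill after the filler's move. *)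

(* Defs.v *)
From Stdlib Require Import Reals.
From mathcomp Require Import all_boot.

Set Implicit Arguments.
Unset Strict Implicit.
Unset Printing Implicit Defensive.

Open Scope R_scope.

Definition state (n : nat) := 'I_n -> R.

Definition valid_filler_move (n p : nat) (a : 'I_n -> R) : Prop :=
  (1 <= p)%N /\ (p <= n)%N /\
  (forall i, 0 <= a i <= 1) /\
  \big[Rplus/0]_(i < n) a i = INR p.

Definition greedy_choice (n p : nat) (y : 'I_n -> R) (S : {set 'I_n}) : Prop :=
  #|S| = p /\ (forall i j, i \in S -> j \notin S -> y j <= y i).

Definition empty_step (n : nat) (eps : R) (y : 'I_n -> R) (S : {set 'I_n}) : 'I_n -> R :=
  fun i => if i \in S then Rmax 0 (y i - (1 + eps)) else y i.

(* Quantifying over all reachable states covers every filler strategy,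
   every greedy tie-breaking rule, and every time. *)
Inductive greedy_reachable (n : nat) (eps : R) : state n -> Prop :=
| gr_init : greedy_reachable eps (fun _ => 0)
| gr_step (x : state n) (p : nat) (a : 'I_n -> R) (S : {set 'I_n}) :
    greedy_reachable eps x ->
    valid_filler_move p a ->
    greedy_choice p (fun i => x i + a i) S ->
    greedy_reachable eps (empty_step eps (fun i => x i + a i) S).

Definition backlog_le (n : nat) (x : state n) (B : R) : Prop :=
  forall i, x i <= B.

(* Main.v *)
From HB Require Import structures.
Require Import Defs.
From Stdlib Require Import Reals Lra.
From mathcomp Require Import all_boot.
Open Scope R_scope.

HB.instance Definition _ := Monoid.isComLaw.Build R 0 Rplus (fun a b c => esym (Rplus_assoc a b c)) Rplus_comm Rplus_0_l.

Section Sums.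
Variable n : nat.
Implicit Types (P : pred 'I_n) (F G : 'I_n -> R).

Lemma sum_le P F G : (forall i, P i -> F i <= G i) ->
  \big[Rplus/0]_(i | P i) F i <= \big[Rplus/0]_(i | P i) G i.
Proof. move=> H; apply: (big_ind2 (fun x y => x <= y)); intros; try lra; auto. Qed.

Lemma sum_ge0 P F : (forall i, P i -> 0 <= F i) -> 0 <= \big[Rplus/0]_(i | P i) F i.
Proof. move=> H; apply: (big_ind (fun x => 0 <= x)); intros; try lra; auto. Qed.

Lemma sum_scal P c F : \big[Rplus/0]_(i | P i) (c * F i) = c * \big[Rplus/0]_(i | P i) F i.
Proof. elim/big_rec2: _ => [|i y1 y2 _ ->]; ring. Qed.

Lemma sum_add P F G : \big[Rplus/0]_(i | P i) (F i + G i) = \big[Rplus/0]_(i | P i) F i + \big[Rplus/0]_(i | P i) G i.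
Proof. exact: big_split. Qed.

Lemma sum_const P c : \big[Rplus/0]_(i | P i) c = INR #|P| * c.
Proof.
have -> : \big[Rplus/0]_(i | P i) c = \big[Rplus/0]_(i in P) c by [].
rewrite big_const.
elim: #|P| => [|k IH] /=; first ring.
rewrite IH; case: k {IH} => [|k]; simpl; ring.
Qed.
End Sums.
Arguments sum_le {n P F G}.

Lemma exp_le_mono a b : a <= b -> exp a <= exp b.
Proof. move=> H; case: (Rle_lt_or_eq_dec _ _ H) => [/exp_increasing|->]; lra. Qed.

Lemma exp_neg_le u : 0 <= u -> exp (- u) <= / (1 + u).
Proof.
move=> Hu; rewrite exp_Ropp; apply: Rinv_le_contravar; first lra.
have := exp_ineq1_le u; lra.
Qed.

Lemma exp_neg_ge u : 1 - u <= exp (- u).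
Proof. have := exp_ineq1_le (- u); lra. Qed.

Lemma seq_min (T : eqType) (f : T -> R) (l : seq T) : l <> [::] ->
  exists2 m, m \in l & forall j, j \in l -> f m <= f j.
Proof.
elim: l => [//|a l IH] _.
case: l IH => [|b l] IH.
  exists a; first by rewrite inE eqxx.
  by move=> j; rewrite inE => /eqP ->; lra.
have [m Hm Hmin] := IH (fun E => ltac:(discriminate E)).
case: (Rle_dec (f a) (f m)) => H.
  exists a; first by rewrite inE eqxx.
  move=> j; rewrite inE => /orP [/eqP ->|/Hmin]; lra.
exists m; first by rewrite inE Hm orbT.
move=> j; rewrite inE => /orP [/eqP ->|/Hmin]; lra.
Qed.

Section Sums2.
Variable n : nat.
Lemma sum_split (S : {set 'I_n}) (F : 'I_n -> R) :
  \big[Rplus/0]_(i < n) F i =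
  \big[Rplus/0]_(i | i \in S) F i + \big[Rplus/0]_(i | i \notin S) F i.
Proof. by rewrite (bigID (fun i => i \in S)) /=. Qed.
End Sums2.
Arguments sum_split {n}.

Lemma sum_const_ord n c : \big[Rplus/0]_(i < n) c = INR n * c.
Proof.
rewrite big_const_ord.
elim: n => [|k IH] /=; first ring.
rewrite IH; case: k {IH} => [|k]; simpl; ring.
Qed.


Definition lamE (eps : R) := eps / 4.
Definition KE (eps : R) := 12 / (eps * eps).
Definition Phi (n : nat) (eps : R) (x : state n) :=
  \big[Rplus/0]_(i < n) exp (lamE eps * x i).
Arguments Phi {n}.

Lemma cK eps : 0 < eps <= 1 ->
  1 <= (lamE eps * (1 + eps) / (1 + lamE eps * (1 + eps)) - lamE eps) * KE eps.
Proof.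
move=> He; rewrite /lamE /KE.
have H1 : 0 < 4 + eps * (1 + eps) by nra.
have -> : (eps / 4 * (1 + eps) / (1 + eps / 4 * (1 + eps)) - eps / 4) * (12 / (eps * eps))
   = 3 * (3 - eps) / (4 + eps * (1 + eps)) by field; lra.
apply: (Rmult_le_reg_r (4 + eps * (1 + eps))); first lra.
rewrite /Rdiv Rmult_assoc Rinv_l; nra.
Qed.

Lemma step n eps (x : state n) p a (S : {set 'I_n}) :
  0 < eps <= 1 -> (forall i, 0 <= x i) -> Phi eps x <= INR n * KE eps ->
  valid_filler_move p a -> greedy_choice p (fun i => x i + a i) S ->
  (forall i, 0 <= empty_step eps (fun i => x i + a i) S i) /\
  Phi eps (empty_step eps (fun i => x i + a i) S) <= INR n * KE eps.
Proof.
move=> He Hx HPhi [Hp1 [Hpn [Ha Hsum]]] [HS Hgr].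
set y := fun i => x i + a i.
have Hy : forall i, 0 <= y i by move=> i; have := Hx i; have := Ha i; rewrite /y; lra.
split.
  move=> i; rewrite /empty_step; case: (i \in S); [exact: Rmax_l| exact: Hy].
set lam := lamE eps.
have Hlam : 0 < lam by rewrite /lam /lamE; lra.
set W := fun i => exp (lam * y i).
have [m HmS Hmin] : exists2 m, m \in S & forall j, j \in S -> W m <= W j.
  have Hne : enum S <> [::].
    move=> E; have : #|S| = 0%N by rewrite cardE E.
    by rewrite HS => Hp0; rewrite Hp0 in Hp1.
  have [m Hm Hmin] := @seq_min _ W _ Hne.
  by exists m; [rewrite -mem_enum | move=> j Hj; apply: Hmin; rewrite mem_enum].
have Hnot : forall j, j \notin S -> W j <= W m.
  move=> j Hj; apply: exp_le_mono; apply: Rmult_le_compat_l; first lra.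
  exact: Hgr.
have cardS : #|[pred i | i \in S]| = p by rewrite -HS; apply: eq_card.
have HpS : \big[Rplus/0]_(i | i \in S) 1 = INR p by rewrite sum_const cardS; ring.
have Hwa : \big[Rplus/0]_(i < n) (W i * a i) <= \big[Rplus/0]_(i | i \in S) W i.
  rewrite (sum_split S).
  have H1 : \big[Rplus/0]_(i | i \notin S) (W i * a i) <=
            W m * \big[Rplus/0]_(i | i \notin S) a i.
    rewrite -sum_scal; apply: sum_le => i Hi.
    have := Hnot i Hi; have := Ha i; nra.
  have H2 : \big[Rplus/0]_(i | i \notin S) a i =
            \big[Rplus/0]_(i | i \in S) (1 - a i).
    have E : forall i, 1 - a i = 1 + (-1) * a i by move=> i; ring.
    rewrite (eq_bigr (fun i => 1 + (-1) * a i) (P := fun i => i \in S) (F1 := fun i => 1 - a i)); last by move=> i _; ring.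
    rewrite sum_add sum_scal HpS -Hsum (sum_split S a).
set A1 := \big[Rplus/0]_(i in S) a i. set A2 := \big[Rplus/0]_(i | i \notin S) a i. ring.
  have H3 : \big[Rplus/0]_(i | i \in S) (W i * a i) +
            W m * \big[Rplus/0]_(i | i \in S) (1 - a i) <=
            \big[Rplus/0]_(i | i \in S) W i.
    rewrite -sum_scal -sum_add; apply: sum_le => i Hi.
    have := Hmin i Hi; have := Ha i; rewrite /=; nra.
  rewrite H2 in H1; lra.
have HWpos : forall i, 0 < W i by move=> i; exact: exp_pos.
have HF : \big[Rplus/0]_(i < n) W i <= Phi eps x + lam * \big[Rplus/0]_(i < n) (W i * a i).
  rewrite -sum_scal /Phi -/lam -sum_add; apply: sum_le => i _.
  have E : exp (lam * x i) = W i * exp (- (lam * a i)).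
    by rewrite /W /y -exp_plus; f_equal; ring.
  rewrite E; have := exp_neg_ge (lam * a i); have := HWpos i; have := Ha i; nra.
set u := lam * (1 + eps).
have Hu : 0 <= u by rewrite /u; nra.
set x' := empty_step eps y S.
have E1 : forall i, i \in S -> exp (lam * x' i) <= / (1 + u) * W i + 1.
  move=> i Hi; rewrite /x' /empty_step Hi /Rmax.
  have Hinv : 0 < / (1 + u) by apply: Rinv_0_lt_compat; lra.
  case: (Rle_dec 0 (y i - (1 + eps))) => _.
    have -> : exp (lam * (y i - (1 + eps))) = W i * exp (- u).
      by rewrite /W /u -exp_plus; f_equal; ring.
    have := @exp_neg_le u Hu; have := HWpos i; nra.
  rewrite Rmult_0_r exp_0; have := HWpos i; nra.
have E2 : forall i, i \in S -> exp (lam * x' i) <= W i.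
  move=> i Hi; apply: exp_le_mono; apply: Rmult_le_compat_l; first lra.
  rewrite /x' /empty_step Hi; apply: Rmax_lub; [exact: Hy | lra].
have E3 : forall i, i \notin S -> exp (lam * x' i) = W i.
  by move=> i Hi; rewrite /x' /empty_step (negbTE Hi).
have HK : 0 < KE eps by rewrite /KE; apply: Rdiv_lt_0_compat; nra.
have Hpp : 0 < INR p by apply: lt_0_INR; apply/ltP.
rewrite /Phi -/lam (sum_split S).
rewrite (eq_bigr (fun i => W i) (fun i Hi => E3 i Hi)).
have HW := sum_split S W.
set sS := \big[Rplus/0]_(i | i \in S) W i.
set sN := \big[Rplus/0]_(i | i \notin S) W i.
have HW' : \big[Rplus/0]_(i < n) W i = sS + sN := HW.
have Hwa' : \big[Rplus/0]_(i < n) (W i * a i) <= sS := Hwa.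
clear HW Hwa.
case: (Rle_dec (INR p * KE eps) sS) => Hcase.
  have H1 : \big[Rplus/0]_(i | i \in S) exp (lam * x' i) <= / (1 + u) * sS + INR p.
    apply: Rle_trans (sum_le E1) _.
    rewrite sum_add sum_scal HpS.
    exact: Rle_refl.
  have := @cK eps He; rewrite -/lam -/u => Hc.
  set c := u / (1 + u) - lam in Hc.
  have Hc0 : 0 < c.
    case: (Rle_lt_dec c 0) => // Hc0; nra.
  have HcS : INR p <= c * sS by nra.
  have Eq : / (1 + u) * sS = sS - (c + lam) * sS by rewrite /c; field; lra.
  nra.
have HmK : W m < KE eps.
  have : INR p * W m <= sS.
    rewrite -cardS -sum_const; apply: sum_le => i Hi; exact: Hmin.
  nra.
have H1 : \big[Rplus/0]_(i | i \in S) exp (lam * x' i) <= sS := sum_le E2.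
have H2 : sN <= \big[Rplus/0]_(i | i \notin S) KE eps.
  apply: sum_le => i Hi; have := Hnot i Hi; lra.
have H3 : sS <= \big[Rplus/0]_(i | i \in S) KE eps.
  rewrite sum_const cardS; lra.
rewrite -sum_const_ord (sum_split S); lra.
Qed.

Lemma inv n eps (x : state n) : 0 < eps <= 1 -> greedy_reachable eps x ->
  (forall i, 0 <= x i) /\ Phi eps x <= INR n * KE eps.
Proof.
move=> He; elim => [|x0 p a S _ [IH1 IH2] Hv Hg].
  split => [i|]; first lra.
  rewrite /Phi (eq_bigr (fun _ => 1)); last by move=> i _; rewrite Rmult_0_r exp_0.
  rewrite sum_const_ord.
  have : 1 <= KE eps.
    rewrite /KE; apply: (Rmult_le_reg_r (eps * eps)); first nra.
    rewrite /Rdiv Rmult_assoc Rinv_l; nra.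
  have := pos_INR n; nra.
exact: (@step n eps x0 p a S He IH1 IH2 Hv Hg).
Qed.

Lemma term_le n eps (x : state n) i : exp (lamE eps * x i) <= Phi eps x.
Proof.
rewrite /Phi (bigD1 i) //=.
have : 0 <= \big[Rplus/0]_(j | j != i) exp (lamE eps * x j).
  by apply: sum_ge0 => j _; apply: Rlt_le; exact: exp_pos.
move=> H; have := Rplus_le_compat_l (exp (lamE eps * x i)) _ _ H.
by rewrite Rplus_0_r.
Qed.

Lemma ln_le_mono {a b : R} : 0 < a -> a <= b -> ln a <= ln b.
Proof. move=> Ha H; case: (Rle_lt_or_eq_dec _ _ H) => [/ln_increasing|->]; try lra; auto. Qed.

Theorem theorem7p1 :
  exists C : R, 0 < C /\
    forall eps : nat -> R,
      (forall n : nat, eps n <= 1) ->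
      (forall M : R, exists N : nat, forall n : nat, (N <= n)%N -> M <= INR n * eps n) ->
      exists N : nat, forall n : nat, (N <= n)%N ->
        forall x : state n, greedy_reachable (eps n) x ->
          backlog_le x (C / eps n * ln (INR n)).
Proof.
exists 16; split; first lra.
move=> eps Hle Hgrow.
have [N1 HN1] := Hgrow 1.
exists (maxn N1 12) => n Hn x Hx i.
have Hn1 : 1 <= INR n * eps n by apply: HN1; apply: leq_trans Hn; exact: leq_maxl.
have Hn12 : 12 <= INR n.
  have : (12 <= n)%N by apply: leq_trans Hn; exact: leq_maxr.
  move/leP/le_INR; simpl; lra.
set e := eps n in Hn1 *.
have He : 0 < e <= 1 by split; [nra | exact: Hle].
have [_ HPhi] := @inv n e x He Hx.
have Ht := @term_le n e x i.
have Hexp : exp (lamE e * x i) <= INR n * (12 / (e * e)) by rewrite /KE in HPhi; lra.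
have Hpos : 0 < INR n * (12 / (e * e)).
  apply: Rmult_lt_0_compat; first lra; apply: Rdiv_lt_0_compat; nra.
have Hl := ln_le_mono (exp_pos (lamE e * x i)) Hexp.
rewrite ln_exp in Hl.
rewrite ln_mult in Hl; [|lra|apply: Rdiv_lt_0_compat; nra].
rewrite /Rdiv ln_mult in Hl; [|lra|apply: Rinv_0_lt_compat; nra].
rewrite ln_Rinv in Hl; last nra.
rewrite ln_mult in Hl; [|lra|lra].
have H12 : ln 12 <= ln (INR n) by apply: ln_le_mono; lra.
have Hie : / INR n <= e.
  apply: (Rmult_le_reg_l (INR n)); first lra.
  rewrite Rinv_r; lra.
have Hle' : - ln (INR n) <= ln e.
  rewrite -ln_Rinv; last lra.
  apply: ln_le_mono => //; apply: Rinv_0_lt_compat; lra.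
rewrite /lamE in Hl.
have : e / 4 * x i <= 4 * ln (INR n) by lra.
move=> H.
apply: (Rmult_le_reg_l (e / 4)); first lra.
have -> : e / 4 * (16 / e * ln (INR n)) = 4 * ln (INR n) by field; lra.
exact: H.
Qed.
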